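(* For any $\alpha\ge1$, $\gamma>1$ and $\varepsilon>0$ there exists an instance and an outcome in it which satisfies $\alpha$-proportional fairness but is not in the $\left(\gamma,\frac{\gamma\alpha+1}{\gamma-1}-\varepsilon\right)$-transferable core.
   Context: Let $(\mathcal X,d)$ be a metric space, $N=[n]$ a set of agents and $C$ a set of candidates located in $\mathcal X$, $k\in\mathbb N^+$; an outcome is $W\subseteq C$ with $|W|\le k$; $d(i,W)=\min_{c\in W}d(i,c)$. $\alpha$-proportional fairness: there is no group $N'\subseteq N$ with $|N'|\ge n/k$ and candidate $c\in C\setminus W$ such that $\alpha\, d(i,c)<d(i,W)$ for all $i\in N'$. $(\gamma,\alpha)$-transferable core: $W$ is in it if there is no group $N'\subseteq N$ and candidate $c\in C\setminus W$ with $|N'|\ge\gamma n/k$ and $\alpha\sum_{i\in N'}d(i,c)<\sum_{i\in N'}d(i,W)$. *)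

(* Defs.v *)
From HB Require Import structures.
From mathcomp Require Import all_boot all_order all_algebra.
From mathcomp Require Import reals.
Set Implicit Arguments. Unset Strict Implicit. Unset Printing Implicit Defensive.
Import Order.TTheory GRing.Theory Num.Theory.
Local Open Scope ring_scope.

Section Defs.
Variable R : realType.

Definition is_metric (X : Type) (d : X -> X -> R) : Prop :=
  (forall x y, 0 <= d x y) /\
  (forall x y, d x y = 0 <-> x = y) /\
  (forall x y, d x y = d y x) /\
  (forall x y z, d x z <= d x y + d y z).

Variables (X : Type) (d : X -> X -> R) (n m : nat)
  (agent : 'I_n -> X) (cand : 'I_m -> X).

(* d(i, W) = min_{c in W} d(i, c); only meaningful for nonempty W
   (set to 0 for W empty, which never arises below). *)
Definition distW (W : {set 'I_m}) (i : 'I_n) : R :=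
  if [pick c in W] is Some c0 then
    \big[Num.min/d (agent i) (cand c0)]_(c in W) d (agent i) (cand c)
  else 0.

Definition prop_fair (k : nat) (alpha : R) (W : {set 'I_m}) : Prop :=
  ~ exists (N' : {set 'I_n}) (c : 'I_m),
      [/\ (n%:R / k%:R : R) <= #|N'|%:R, c \notin W &
          forall i, i \in N' -> alpha * d (agent i) (cand c) < distW W i].

Definition in_tcore (k : nat) (gamma alpha : R) (W : {set 'I_m}) : Prop :=
  ~ exists (N' : {set 'I_n}) (c : 'I_m),
      [/\ (gamma * n%:R / k%:R : R) <= #|N'|%:R, c \notin W &
          alpha * (\sum_(i in N') d (agent i) (cand c)) < \sum_(i in N') distW W i].
End Defs.

(* Main.v *)
Require Import Defs.
From HB Require Import structures.
From mathcomp Require Import all_boot all_order all_algebra.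
From mathcomp Require Import reals archimedean.
From mathcomp Require Import ring lra.
Import Order.TTheory GRing.Theory Num.Theory.
Local Open Scope ring_scope.

Section Aux.
Variable R : realType.
Variable alpha : R.

(* points: 0 = c, 1 = w, 2 = y *)
Definition dd (a b : 'I_3) : R :=
  if a == b then 0 else
  if ((val a == 0%N) && (val b == 1%N)) || ((val a == 1%N) && (val b == 0%N)) then 1 + alpha
  else if ((val a == 0%N) && (val b == 2%N)) || ((val a == 2%N) && (val b == 0%N)) then 1
  else alpha.

Lemma dd_metric : 1 <= alpha -> is_metric dd.
Proof.
move=> ha; rewrite /is_metric /dd.
split; [|split; [|split]].
- by case=> [[|[|[|?]]] ?] [[|[|[|?]]] ?] //=; lra.
- case=> [[|[|[|?]]] ?] [[|[|[|?]]] ?] //=; split=> // h; try (apply/val_inj=> //=);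
    try (exfalso; move: h; lra).
- by case=> [[|[|[|?]]] ?] [[|[|[|?]]] ?].
- by case=> [[|[|[|?]]] ?] [[|[|[|?]]] ?] [[|[|[|?]]] ?] //=; lra.
Qed.

Lemma card_lt (n j : nat) : (j <= n)%N -> #|[set i : 'I_n | (i < j)%N]| = j.
Proof.
move=> hj.
have -> : #|[set i : 'I_n | (i < j)%N]| = \sum_(i < n | (i < j)%N) 1%N.
  by rewrite -sum1_card; apply: eq_bigl => i; rewrite inE.
rewrite -(big_ord_widen_cond _ (fun _ => true) (fun _ => 1%N) hj) /=.
by rewrite sum1_card card_ord.
Qed.

Lemma sum_split (n T p : nat) (a b : R) : (p <= T)%N -> (T <= n)%N ->
  \sum_(i in [set i : 'I_n | (i < T)%N]) (if (i < p)%N then a else b) = a *+ p + b *+ (T - p).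
Proof.
move=> hpT hTn.
have -> : \sum_(i in [set i : 'I_n | (i < T)%N]) (if (i < p)%N then a else b)
   = \sum_(i < n | true && (i < T)%N) (if (i < p)%N then a else b).
  by apply: eq_bigl => i; rewrite inE.
rewrite -(big_ord_widen_cond _ (fun _ => true) (fun i => if (i < p)%N then a else b) hTn) /=.
rewrite -(big_mkord (fun _ => true) (fun i => if (i < p)%N then a else b)).
rewrite (big_cat_nat (leq0n p) hpT) /=.
rewrite (@eq_big_nat _ _ _ 0 p _ (fun _ => a)); last by move=> i /andP[_ ->].
rewrite (@eq_big_nat _ _ _ p T _ (fun _ => b)); last first.
  by move=> i /andP[h _]; rewrite ltnNge h.
by rewrite !sumr_const_nat subn0.
Qed.

End Aux.
Arguments dd {R}.
Arguments dd_metric {R alpha}.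
Arguments sum_split {R}.

Lemma distW1 (R : realType) (X : Type) (d : X -> X -> R) (n m : nat)
  (agent : 'I_n -> X) (cand : 'I_m -> X) (a : 'I_m) (i : 'I_n) :
  distW d agent cand [set a] i = d (agent i) (cand a).
Proof.
rewrite /distW; case: pickP => [x hx|h]; last by move: (h a); rewrite inE eqxx.
have -> : x = a by move: hx; rewrite inE => /eqP.
by rewrite -big_filter deprecated_filter_index_enum enum_set1 big_cons big_nil minxx.
Qed.

Theorem theorem4 (R : realType) (alpha gamma eps : R) :
  1 <= alpha -> 1 < gamma -> 0 < eps ->
  exists (X : Type) (d : X -> X -> R), is_metric d /\
  exists (n m k : nat) (agent : 'I_n -> X) (cand : 'I_m -> X) (W : {set 'I_m}),
    [/\ [/\ (0 < n)%N, (0 < k)%N, W != set0 & (#|W| <= k)%N],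
        prop_fair d agent cand k alpha W &
        ~ in_tcore d agent cand k gamma ((gamma * alpha + 1) / (gamma - 1) - eps) W].
Proof.
move=> ha hg he.
set beta := (gamma * alpha + 1) / (gamma - 1) - eps.
set z := beta - alpha.
set K := z * (gamma + 1) / (eps * (gamma - 1)).
set p := (Num.Def.trunc K).+1.
have hKp : K < p%:R by apply: truncnS_gt.
set T := (Num.Def.trunc (gamma * (p.+1)%:R)).+1.
have hT1 : gamma * (p.+1)%:R < T%:R by apply: truncnS_gt.
have hT2 : T%:R <= gamma * (p.+1)%:R + 1.
  rewrite /T -addn1 natrD lerD2r truncn_le.
  by apply: mulr_ge0; [lra | apply: ler0n].
have hpT : (p <= T)%N.
  rewrite -(ler_nat R); apply: ltW; apply: le_lt_trans hT1.
  rewrite -[X in X <= _]mul1r; apply: ler_pM; [lra|apply: ler0n|lra|].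
  by rewrite ler_nat.
set n := (T * p.+1)%N.
have hTn : (T <= n)%N by rewrite /n leq_pmulr.
have hT0 : (0 < T)%N by [].
pose c0 : 'I_3 := @Ordinal 3 0 isT.
pose w : 'I_3 := @Ordinal 3 1 isT.
pose y : 'I_3 := @Ordinal 3 2 isT.
pose agent := fun i : 'I_n => if (i < p)%N then c0 else y.
pose cand := fun j : 'I_2 => if val j == 0%N then w else c0.
pose W := [set ord0 : 'I_2].
have hdW : forall i, distW (dd alpha) agent cand W i = dd alpha (agent i) w.
  by move=> i; rewrite distW1.
have eN : n%:R / T%:R = p.+1%:R :> R.
  have hT : T%:R != 0 :> R by rewrite pnatr_eq0 -lt0n.
  by rewrite /n natrM mulrC mulrA mulVf // mul1r.
exists 'I_3, (dd alpha); split; first exact: dd_metric.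
exists n, 2%N, T, agent, cand, W.
split.
- split => //.
  + by apply/set0Pn; exists ord0; rewrite inE.
  + by rewrite cards1.
- move=> [N' [c [hsz hc hall]]].
  have hc1 : cand c = c0.
    rewrite /cand; move: hc; case: c {hall} => [[|[|?]] ?] //=; by rewrite inE.
  have hsub : N' \subset [set i : 'I_n | (i < p)%N].
    apply/subsetP => i hi; rewrite inE; move: (hall i hi); rewrite hdW hc1 /agent.
    case: (i < p)%N => //.
    rewrite /dd /=; lra.
  have := subset_leq_card hsub; rewrite card_lt; last by apply: leq_trans hpT hTn.
  move: hsz; rewrite eN.
  move=> h1 h2; move: h1; rewrite -(ler_nat R) in h2.
  by move/(le_trans)/(_ h2); rewrite ler_nat ltnn.
- apply; exists [set i : 'I_n | (i < T)%N], (@Ordinal 2 1 isT); split.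
  + rewrite card_lt // -mulrA eN.
    by apply: ltW.
  + by rewrite inE.
  + have e1 : forall i : 'I_n, dd alpha (agent i) (cand (@Ordinal 2 1 isT))
                 = if (i < p)%N then 0 else 1.
      by move=> i; rewrite /agent /cand /=; case: (i < p)%N.
    have e2 : forall i : 'I_n, distW (dd alpha) agent cand W i
                 = if (i < p)%N then 1 + alpha else alpha.
      by move=> i; rewrite hdW /agent; case: (i < p)%N.
    rewrite (eq_bigr _ (fun i _ => e1 i)) (eq_bigr _ (fun i _ => e2 i)).
    rewrite !sum_split // mul0rn add0r.
    have hq : (T - p)%:R = T%:R - p%:R :> R by rewrite natrB.
    rewrite -[(1 + alpha) *+ p]mulr_natr -[alpha *+ (T - p)]mulr_natr hq.
    move: hT2; rewrite -addn1 natrD => hT2.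
    have hP1 : 1 <= p%:R :> R by rewrite ler1n.
    have hPT : p%:R <= T%:R :> R by rewrite ler_nat.
    have hg1 : gamma - 1 != 0 by rewrite subr_eq0 gt_eqF.
    have h1 : z * (gamma - 1) = 1 + alpha - eps * (gamma - 1).
      rewrite /z /beta mulrBl mulrBl mulfVK //; ring.
    have h2 : z * (gamma + 1) < eps * (gamma - 1) * p%:R.
      have hE : 0 < eps * (gamma - 1) by apply: mulr_gt0; lra.
      by move: hKp; rewrite /K ltr_pdivrMr // [eps * _ * _]mulrC.
    have hbeta : beta = z + alpha by rewrite /z; ring.
    rewrite hbeta.
    set q := T%:R - p%:R.
    have hq0 : 0 <= q by rewrite /q subr_ge0.
    have hq1 : q <= (gamma - 1) * p%:R + gamma + 1.
      rewrite /q; move: hT2; set P := p%:R; set TT := T%:R; lra.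
    suff : z * q < (1 + alpha) * p%:R by lra.
    have [hz|hz] := lerP z 0.
      have : z * q <= 0 by rewrite mulr_le0_ge0.
      have : 0 < (1 + alpha) * p%:R by apply: mulr_gt0; lra.
      lra.
    have h3 : z * q <= z * ((gamma - 1) * p%:R + gamma + 1) by rewrite ler_pM2l.
    have h4 : z * ((gamma - 1) * p%:R + gamma + 1)
        = z * (gamma - 1) * p%:R + z * (gamma + 1) by ring.
    move: h3; rewrite h4 h1; move: h2.
    set P := p%:R; set E := eps * (gamma - 1); set zq := z * q; set zg := z * (gamma + 1).
    nra.
Qed.
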